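(* Let $S$ be an oriented 2-manifold diffeomorphic to the 2-torus, let $g$ and $\tilde g$ be Riemannian metrics on $S$ with codifferentials $\delta$ and $\tilde\delta$ respectively, and let $P,Q\in C^\infty(S)$ with $P,Q>0$. Define on $\Omega^1(S)$ the operators $\delta_p = P^{-1}\delta P$ and $\tilde\delta_q = Q^{-1}\tilde\delta Q$ (i.e. $\delta_p\omega = P^{-1}\delta(P\omega)$, $\tilde\delta_q\omega = Q^{-1}\tilde\delta(Q\omega)$). If $\ker\delta_p\subset\ker\tilde\delta_q$ (as subsets of $\Omega^1(S)$), then $g$ and $\tilde g$ are conformally equivalent and $P = cQ$ for some constant $c>0$. *)

(* Defs.v *)
(* The surface S (diffeomorphic to the 2-torus) is modelled, via a fixed
   diffeomorphism, as the standard torus R^2 / Z^2: smooth functions on S are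
   smooth functions R -> R -> R that are 1-periodic in each variable. *)
From Stdlib Require Import Reals.
From Coquelicot Require Import Coquelicot.
Open Scope R_scope.

Definition dx (f : R -> R -> R) : R -> R -> R := fun x y => Derive (fun t => f t y) x.
Definition dy (f : R -> R -> R) : R -> R -> R := fun x y => Derive (fun t => f x t) y.

Fixpoint Ck (k : nat) (f : R -> R -> R) : Prop :=
  (forall x y, continuity_2d_pt f x y) /\
  match k with
  | O => True
  | S m => (forall x y, ex_derive (fun t => f t y) x) /\
           (forall x y, ex_derive (fun t => f x t) y) /\
           Ck m (dx f) /\ Ck m (dy f)
  end.

Definition smooth (f : R -> R -> R) : Prop := forall k, Ck k f.

Definition periodic (f : R -> R -> R) : Prop :=
  forall x y, f (x + 1) y = f x y /\ f x (y + 1) = f x y.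

Definition smooth_on_torus (f : R -> R -> R) : Prop := smooth f /\ periodic f.

(* Riemannian metric g = g11 dx^2 + 2 g12 dx dy + g22 dy^2 on the torus *)
Record metric := Metric { g11 : R -> R -> R; g12 : R -> R -> R; g22 : R -> R -> R }.

Definition gdet (g : metric) : R -> R -> R :=
  fun x y => g11 g x y * g22 g x y - g12 g x y * g12 g x y.

Definition is_riemannian_metric (g : metric) : Prop :=
  smooth_on_torus (g11 g) /\ smooth_on_torus (g12 g) /\ smooth_on_torus (g22 g) /\
  (forall x y, 0 < g11 g x y) /\ (forall x y, 0 < gdet g x y).

(* 1-forms a dx + b dy; Omega^1(S) = pairs of smooth periodic functions *)
Definition is_one_form (a b : R -> R -> R) : Prop :=
  smooth_on_torus a /\ smooth_on_torus b.

(* codifferential of a 1-form: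
   delta w = - (1/sqrt G) ( d_x (sqrt G (g^11 a + g^12 b)) + d_y (sqrt G (g^21 a + g^22 b)) ) *)
Definition codiff (g : metric) (a b : R -> R -> R) : R -> R -> R :=
  fun x y =>
    let G := gdet g in
    let V1 := fun u v => sqrt (G u v) * ((g22 g u v / G u v) * a u v
                                          - (g12 g u v / G u v) * b u v) in
    let V2 := fun u v => sqrt (G u v) * (- (g12 g u v / G u v) * a u v
                                          + (g11 g u v / G u v) * b u v) in
    - / sqrt (G x y) * (dx V1 x y + dy V2 x y).

Definition wcodiff (g : metric) (P a b : R -> R -> R) : R -> R -> R :=
  fun x y => / P x y * codiff g (fun u v => P u v * a u v) (fun u v => P u v * b u v) x y.

Definition ker_incl (g gt : metric) (P Q : R -> R -> R) : Prop :=
  forall a b, is_one_form a b ->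
    (forall x y, wcodiff g P a b x y = 0) -> (forall x y, wcodiff gt Q a b x y = 0).

Definition conformally_equivalent (g gt : metric) : Prop :=
  exists lam : R -> R -> R, smooth_on_torus lam /\ (forall x y, 0 < lam x y) /\
    forall x y, g11 gt x y = lam x y * g11 g x y /\ g12 gt x y = lam x y * g12 g x y /\
                g22 gt x y = lam x y * g22 g x y.

(* Main.v *)
Require Import Defs.
From Stdlib Require Import Reals Lra FunctionalExtensionality.
From Coquelicot Require Import Coquelicot.
Open Scope R_scope.

Lemma Ck_cont k f : Ck k f -> forall x y, continuity_2d_pt f x y.
Proof. destruct k; simpl; tauto. Qed.

Lemma Ck_mono k f : Ck (S k) f -> Ck k f.
Proof.
  revert f; induction k as [|k IH]; intros f H.
  - simpl in *; tauto.
  - destruct H as [Hc [Hx [Hy [H1 H2]]]].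
    split; [exact Hc|]. split; [exact Hx|]. split; [exact Hy|].
    split; apply IH; assumption.
Qed.

Lemma Ck_ext k f g : (forall x y, f x y = g x y) -> Ck k f -> Ck k g.
Proof.
  intros H. replace g with f; [auto|].
  apply functional_extensionality; intro x; apply functional_extensionality; intro y; auto.
Qed.

Lemma fun2_ext (f g : R -> R -> R) : (forall x y, f x y = g x y) -> f = g.
Proof. intros H; apply functional_extensionality; intro x; apply functional_extensionality; auto. Qed.

Lemma Ck_const k c : Ck k (fun _ _ => c).
Proof.
  induction k as [|k IH]; simpl.
  - split; auto. intros; apply continuity_2d_pt_const.
  - split; [intros; apply continuity_2d_pt_const|].
    split; [intros; apply ex_derive_const|].
    split; [intros; apply ex_derive_const|].
    assert (E1 : dx (fun _ _ => c) = fun _ _ => 0).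
    { apply fun2_ext; intros; unfold dx; apply Derive_const. }
    assert (E2 : dy (fun _ _ => c) = fun _ _ => 0).
    { apply fun2_ext; intros; unfold dy; apply Derive_const. }
    rewrite E1, E2.
    assert (H0 : forall k, Ck k (fun _ _ : R => 0)).
    { clear. induction k as [|k IH]; simpl.
      - split; auto. intros; apply continuity_2d_pt_const.
      - split; [intros; apply continuity_2d_pt_const|].
        split; [intros; apply ex_derive_const|].
        split; [intros; apply ex_derive_const|].
        assert (E1 : dx (fun _ _ => 0) = fun _ _ => 0).
        { apply fun2_ext; intros; unfold dx; apply Derive_const. }
        assert (E2 : dy (fun _ _ => 0) = fun _ _ => 0).
        { apply fun2_ext; intros; unfold dy; apply Derive_const. }
        rewrite E1, E2. auto. }
    auto.
Qed.

Lemma Ck_plus k f g : Ck k f -> Ck k g -> Ck k (fun x y => f x y + g x y).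
Proof.
  revert f g; induction k as [|k IH]; intros f g Hf Hg.
  - simpl in *. split; auto. intros; apply continuity_2d_pt_plus; [apply Hf|apply Hg].
  - destruct Hf as [Hfc [Hfx [Hfy [Hf1 Hf2]]]].
    destruct Hg as [Hgc [Hgx [Hgy [Hg1 Hg2]]]].
    split; [intros; apply continuity_2d_pt_plus; auto|].
    split; [intros; apply (ex_derive_plus (fun t => f t y) (fun t => g t y)); auto|].
    split; [intros; apply (ex_derive_plus (fun t => f x t) (fun t => g x t)); auto|].
    split.
    + apply Ck_ext with (fun x y => dx f x y + dx g x y); [|apply IH; auto].
      intros; unfold dx; rewrite Derive_plus; auto.
    + apply Ck_ext with (fun x y => dy f x y + dy g x y); [|apply IH; auto].
      intros; unfold dy; rewrite Derive_plus; auto.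
Qed.

Lemma Ck_mult k f g : Ck k f -> Ck k g -> Ck k (fun x y => f x y * g x y).
Proof.
  revert f g; induction k as [|k IH]; intros f g Hf Hg.
  - simpl in *. split; auto. intros; apply continuity_2d_pt_mult; [apply Hf|apply Hg].
  - pose proof (Ck_mono _ _ Hf) as Hfm. pose proof (Ck_mono _ _ Hg) as Hgm.
    destruct Hf as [Hfc [Hfx [Hfy [Hf1 Hf2]]]].
    destruct Hg as [Hgc [Hgx [Hgy [Hg1 Hg2]]]].
    split; [intros; apply continuity_2d_pt_mult; auto|].
    split; [intros; apply (ex_derive_mult (fun t => f t y) (fun t => g t y)); auto|].
    split; [intros; apply (ex_derive_mult (fun t => f x t) (fun t => g x t)); auto|].
    split.
    + apply Ck_ext with (fun x y => dx f x y * g x y + f x y * dx g x y);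
        [|apply Ck_plus; apply IH; auto].
      intros; unfold dx; rewrite Derive_mult; auto.
    + apply Ck_ext with (fun x y => dy f x y * g x y + f x y * dy g x y);
        [|apply Ck_plus; apply IH; auto].
      intros; unfold dy; rewrite Derive_mult; auto.
Qed.

Lemma Ck_comp_step k (h h' : R -> R) (D : R -> Prop) f :
  (forall z, D z -> is_derive h z (h' z)) -> (forall x y, D (f x y)) ->
  Ck (S k) f -> Ck k (fun x y => h' (f x y)) -> Ck (S k) (fun x y => h (f x y)).
Proof.
  intros Hd HD Hf Hh'.
  pose proof (Ck_mono _ _ Hf) as Hfm.
  destruct Hf as [Hfc [Hfx [Hfy [Hf1 Hf2]]]].
  split.
  { intros x y. apply continuity_1d_2d_pt_comp; auto.
    apply continuity_pt_filterlim. apply (ex_derive_continuous (K:=R_AbsRing) (V:=R_NormedModule) h). eexists; apply Hd; auto. }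
  split.
  { intros x y. destruct (Hfx x y) as [l Hl]. eexists.
    apply (is_derive_comp h (fun t => f t y)); [apply Hd; auto|exact Hl]. }
  split.
  { intros x y. destruct (Hfy x y) as [l Hl]. eexists.
    apply (is_derive_comp h (fun t => f x t)); [apply Hd; auto|exact Hl]. }
  split.
  - apply Ck_ext with (fun x y => dx f x y * h' (f x y)); [|apply Ck_mult; auto].
    intros x y; unfold dx. symmetry; apply is_derive_unique.
    apply (is_derive_comp h (fun t => f t y)); [apply Hd; auto|].
    apply Derive_correct; auto.
  - apply Ck_ext with (fun x y => dy f x y * h' (f x y)); [|apply Ck_mult; auto].
    intros x y; unfold dy. symmetry; apply is_derive_unique.
    apply (is_derive_comp h (fun t => f x t)); [apply Hd; auto|].
    apply Derive_correct; auto.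
Qed.

Lemma Ck_comp0 (h : R -> R) f :
  (forall x y, continuity_pt h (f x y)) -> Ck 0 f -> Ck 0 (fun x y => h (f x y)).
Proof.
  intros Hh Hf. split; auto. intros; apply continuity_1d_2d_pt_comp; auto. apply Hf.
Qed.

Lemma Ck_trig k f : Ck k f -> Ck k (fun x y => sin (f x y)) /\ Ck k (fun x y => cos (f x y)).
Proof.
  revert f; induction k as [|k IH]; intros f Hf.
  - split; apply Ck_comp0; auto; intros; [apply continuity_sin|apply continuity_cos].
  - destruct (IH f (Ck_mono _ _ Hf)) as [Hs Hc]. split.
    + apply (Ck_comp_step k sin cos (fun _ => True)); auto.
      intros; apply is_derive_sin.
    + apply (Ck_comp_step k cos (fun z => - sin z) (fun _ => True)); auto.
      * intros; apply is_derive_cos.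
      * apply Ck_ext with (fun x y => (-1) * sin (f x y)); [intros; ring|].
        apply Ck_mult; auto. apply Ck_const.
Qed.

Lemma Ck_inv k f : (forall x y, 0 < f x y) -> Ck k f -> Ck k (fun x y => / f x y).
Proof.
  intros Hp. revert f Hp; induction k as [|k IH]; intros f Hp Hf.
  - apply Ck_comp0; auto. intros; apply continuity_pt_inv; [apply continuity_pt_id|].
    specialize (Hp x y). unfold id; lra.
  - apply (Ck_comp_step k Rinv (fun z => - (/ z * / z)) (fun z => 0 < z)); auto.
    + intros z Hz. assert (H := is_derive_inv (fun t => t) z 1 (is_derive_id z)).
      replace (- (/ z * / z)) with (- 1 / z ^ 2); [apply H; lra|]. field; lra.
    + apply Ck_ext with (fun x y => (-1) * ((/ f x y) * (/ f x y))); [intros; ring|].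
      apply Ck_mult; [apply Ck_const|]. apply Ck_mult; apply IH; auto; apply Ck_mono; auto.
Qed.

Lemma Ck_sqrt k f : (forall x y, 0 < f x y) -> Ck k f -> Ck k (fun x y => sqrt (f x y)).
Proof.
  intros Hp. revert f Hp; induction k as [|k IH]; intros f Hp Hf.
  - apply Ck_comp0; auto. intros; apply continuity_pt_sqrt. apply Rlt_le, Hp.
  - apply (Ck_comp_step k sqrt (fun z => / 2 * / sqrt z) (fun z => 0 < z)); auto.
    + intros z Hz. assert (H := is_derive_sqrt (fun t => t) z 1 (is_derive_id z) Hz).
      assert (0 < sqrt z) by (apply sqrt_lt_R0; auto).
      replace (/ 2 * / sqrt z) with (1 / (2 * sqrt z)); [apply H|]. field; lra.
    + apply Ck_mult; [apply Ck_const|]. apply Ck_inv.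
      * intros; apply sqrt_lt_R0; auto.
      * apply IH; auto; apply Ck_mono; auto.
Qed.

Lemma Ck_x k : Ck k (fun x _ => x).
Proof.
  destruct k; simpl.
  - split; auto; intros; apply continuity_2d_pt_id1.
  - split; [intros; apply continuity_2d_pt_id1|].
    split; [intros; apply ex_derive_id|].
    split; [intros; apply ex_derive_const|].
    split.
    + apply Ck_ext with (fun _ _ => 1); [|apply Ck_const]. intros; unfold dx; symmetry; apply Derive_id.
    + apply Ck_ext with (fun _ _ => 0); [|apply Ck_const]. intros; unfold dy; symmetry; apply Derive_const.
Qed.

Lemma Ck_y k : Ck k (fun _ y => y).
Proof.
  destruct k; simpl.
  - split; auto; intros; apply continuity_2d_pt_id2.
  - split; [intros; apply continuity_2d_pt_id2|].
    split; [intros; apply ex_derive_const|].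
    split; [intros; apply ex_derive_id|].
    split.
    + apply Ck_ext with (fun _ _ => 0); [|apply Ck_const]. intros; unfold dx; symmetry; apply Derive_const.
    + apply Ck_ext with (fun _ _ => 1); [|apply Ck_const]. intros; unfold dy; symmetry; apply Derive_id.
Qed.

Lemma sm_const c : smooth (fun _ _ => c). Proof. intro k; apply Ck_const. Qed.
Lemma sm_plus f g : smooth f -> smooth g -> smooth (fun x y => f x y + g x y).
Proof. intros H1 H2 k; apply Ck_plus; auto. Qed.
Lemma sm_mult f g : smooth f -> smooth g -> smooth (fun x y => f x y * g x y).
Proof. intros H1 H2 k; apply Ck_mult; auto. Qed.
Lemma sm_inv f : (forall x y, 0 < f x y) -> smooth f -> smooth (fun x y => / f x y).
Proof. intros H1 H2 k; apply Ck_inv; auto. Qed.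
Lemma sm_sqrt f : (forall x y, 0 < f x y) -> smooth f -> smooth (fun x y => sqrt (f x y)).
Proof. intros H1 H2 k; apply Ck_sqrt; auto. Qed.
Lemma sm_sin f : smooth f -> smooth (fun x y => sin (f x y)).
Proof. intros H k; apply Ck_trig; auto. Qed.
Lemma sm_cos f : smooth f -> smooth (fun x y => cos (f x y)).
Proof. intros H k; apply Ck_trig; auto. Qed.
Lemma sm_x : smooth (fun x _ => x). Proof. intro k; apply Ck_x. Qed.
Lemma sm_y : smooth (fun _ y => y). Proof. intro k; apply Ck_y. Qed.
Lemma sm_ext f g : (forall x y, f x y = g x y) -> smooth f -> smooth g.
Proof. intros H H1 k; apply Ck_ext with f; auto. Qed.
Lemma sm_minus f g : smooth f -> smooth g -> smooth (fun x y => f x y - g x y).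
Proof.
  intros H1 H2. apply sm_ext with (fun x y => f x y + (-1) * g x y); [intros; ring|].
  apply sm_plus; auto. apply sm_mult; auto. apply sm_const.
Qed.
Lemma sm_div f g : (forall x y, 0 < g x y) -> smooth f -> smooth g -> smooth (fun x y => f x y / g x y).
Proof. intros H H1 H2. apply sm_mult; auto. apply sm_inv; auto. Qed.

Lemma sm_exdx f : smooth f -> forall x y, ex_derive (fun t => f t y) x.
Proof. intros H x y. destruct (H 1%nat) as [_ [H1 _]]. apply H1. Qed.
Lemma sm_exdy f : smooth f -> forall x y, ex_derive (fun t => f x t) y.
Proof. intros H x y. destruct (H 1%nat) as [_ [_ [H1 _]]]. apply H1. Qed.

Lemma gdet_pos g : is_riemannian_metric g -> forall x y, 0 < gdet g x y.
Proof. intros H; apply H. Qed.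

Lemma gdet_sm g : is_riemannian_metric g -> smooth (gdet g).
Proof.
  intros [[H1 _] [[H2 _] [[H3 _] _]]]. unfold gdet.
  apply sm_minus; apply sm_mult; auto.
Qed.

Definition W1 (g : metric) (a b : R -> R -> R) : R -> R -> R :=
  fun u v => sqrt (gdet g u v) * ((g22 g u v / gdet g u v) * a u v
                                   - (g12 g u v / gdet g u v) * b u v).
Definition W2 (g : metric) (a b : R -> R -> R) : R -> R -> R :=
  fun u v => sqrt (gdet g u v) * (- (g12 g u v / gdet g u v) * a u v
                                   + (g11 g u v / gdet g u v) * b u v).

Lemma codiff_unfold g a b x y :
  codiff g a b x y = - / sqrt (gdet g x y) * (dx (W1 g a b) x y + dy (W2 g a b) x y).
Proof. reflexivity. Qed.

Definition ta (g : metric) (P v1 v2 : R -> R -> R) : R -> R -> R :=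
  fun x y => (g11 g x y * v1 x y + g12 g x y * v2 x y) / (P x y * sqrt (gdet g x y)).
Definition tb (g : metric) (P v1 v2 : R -> R -> R) : R -> R -> R :=
  fun x y => (g12 g x y * v1 x y + g22 g x y * v2 x y) / (P x y * sqrt (gdet g x y)).

Lemma sqrtG_pos g x y : is_riemannian_metric g -> 0 < sqrt (gdet g x y).
Proof. intros H; apply sqrt_lt_R0, gdet_pos; auto. Qed.

Lemma sqrt_sq_G g x y : is_riemannian_metric g -> sqrt (gdet g x y) * sqrt (gdet g x y) = gdet g x y.
Proof. intros H; apply sqrt_sqrt; apply Rlt_le, gdet_pos; auto. Qed.

Lemma W_test g P v1 v2 : is_riemannian_metric g -> (forall x y, 0 < P x y) ->
  W1 g (fun u v => P u v * ta g P v1 v2 u v) (fun u v => P u v * tb g P v1 v2 u v) = v1 /\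
  W2 g (fun u v => P u v * ta g P v1 v2 u v) (fun u v => P u v * tb g P v1 v2 u v) = v2.
Proof.
  intros Hg HP. split; apply fun2_ext; intros x y; unfold W1, W2, ta, tb;
  pose proof (gdet_pos g Hg x y); pose proof (sqrtG_pos g x y Hg);
  pose proof (sqrt_sq_G g x y Hg); pose proof (HP x y); unfold gdet in *;
  field_simplify; try lra; rewrite ?H1; field; lra.
Qed.

Lemma ker_test g P v1 v2 : is_riemannian_metric g -> (forall x y, 0 < P x y) ->
  (forall x y, dx v1 x y + dy v2 x y = 0) ->
  forall x y, wcodiff g P (ta g P v1 v2) (tb g P v1 v2) x y = 0.
Proof.
  intros Hg HP Hd x y. unfold wcodiff. rewrite codiff_unfold.
  destruct (W_test g P v1 v2 Hg HP) as [E1 E2]. rewrite E1, E2, Hd. ring.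
Qed.

Lemma per_test g P v1 v2 : is_riemannian_metric g -> periodic P -> periodic v1 -> periodic v2 ->
  periodic (ta g P v1 v2) /\ periodic (tb g P v1 v2).
Proof.
  intros [[_ H1] [[_ H2] [[_ H3] _]]] HP Hv1 Hv2.
  split; intros x y; unfold ta, tb, gdet;
  destruct (H1 x y) as [-> ->]; destruct (H2 x y) as [-> ->]; destruct (H3 x y) as [-> ->];
  destruct (HP x y) as [-> ->]; destruct (Hv1 x y) as [-> ->]; destruct (Hv2 x y) as [-> ->];
  auto.
Qed.

Lemma oneform_test g P v1 v2 : is_riemannian_metric g -> smooth_on_torus P ->
  (forall x y, 0 < P x y) -> smooth_on_torus v1 -> smooth_on_torus v2 ->
  is_one_form (ta g P v1 v2) (tb g P v1 v2).
Proof.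
  intros Hg [HPs HPp] HP [Hs1 Hp1] [Hs2 Hp2].
  destruct (per_test g P v1 v2 Hg HPp Hp1 Hp2) as [Pa Pb].
  pose proof Hg as [[S1 _] [[S2 _] [[S3 _] _]]].
  assert (Hd : smooth (fun x y => P x y * sqrt (gdet g x y))).
  { apply sm_mult; auto. apply sm_sqrt; [apply gdet_pos; auto|apply gdet_sm; auto]. }
  assert (Hdp : forall x y, 0 < P x y * sqrt (gdet g x y)).
  { intros; apply Rmult_lt_0_compat; [auto|apply sqrtG_pos; auto]. }
  split; split; auto; unfold ta, tb; apply (sm_div _ _ Hdp); auto;
  apply sm_plus; apply sm_mult; auto.
Qed.

Definition den (g gt : metric) (P : R -> R -> R) x y :=
  gdet gt x y * P x y * sqrt (gdet g x y).
Definition m11 g gt P Q : R -> R -> R := fun x y =>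
  sqrt (gdet gt x y) * Q x y * (g22 gt x y * g11 g x y - g12 gt x y * g12 g x y) / den g gt P x y.
Definition m12 g gt P Q : R -> R -> R := fun x y =>
  sqrt (gdet gt x y) * Q x y * (g22 gt x y * g12 g x y - g12 gt x y * g22 g x y) / den g gt P x y.
Definition m21 g gt P Q : R -> R -> R := fun x y =>
  sqrt (gdet gt x y) * Q x y * (g11 gt x y * g12 g x y - g12 gt x y * g11 g x y) / den g gt P x y.
Definition m22 g gt P Q : R -> R -> R := fun x y =>
  sqrt (gdet gt x y) * Q x y * (g11 gt x y * g22 g x y - g12 gt x y * g12 g x y) / den g gt P x y.

Lemma Wt_test g gt P Q v1 v2 : is_riemannian_metric g -> is_riemannian_metric gt ->
  (forall x y, 0 < P x y) -> (forall x y, 0 < Q x y) ->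
  W1 gt (fun u v => Q u v * ta g P v1 v2 u v) (fun u v => Q u v * tb g P v1 v2 u v)
    = (fun x y => m11 g gt P Q x y * v1 x y + m12 g gt P Q x y * v2 x y) /\
  W2 gt (fun u v => Q u v * ta g P v1 v2 u v) (fun u v => Q u v * tb g P v1 v2 u v)
    = (fun x y => m21 g gt P Q x y * v1 x y + m22 g gt P Q x y * v2 x y).
Proof.
  intros Hg Hgt HP HQ. split; apply fun2_ext; intros x y;
  unfold W1, W2, ta, tb, m11, m12, m21, m22, den;
  pose proof (gdet_pos g Hg x y); pose proof (sqrtG_pos g x y Hg);
  pose proof (gdet_pos gt Hgt x y); pose proof (sqrtG_pos gt x y Hgt);
  pose proof (HP x y); pose proof (HQ x y);
  field; repeat split; lra.
Qed.

Lemma m_sm g gt P Q : is_riemannian_metric g -> is_riemannian_metric gt ->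
  smooth_on_torus P -> smooth_on_torus Q -> (forall x y, 0 < P x y) ->
  smooth (m11 g gt P Q) /\ smooth (m12 g gt P Q) /\ smooth (m21 g gt P Q) /\ smooth (m22 g gt P Q).
Proof.
  intros Hg Hgt [HPs _] [HQs _] HP.
  pose proof Hg as [[S1 _] [[S2 _] [[S3 _] _]]].
  pose proof Hgt as [[T1 _] [[T2 _] [[T3 _] _]]].
  assert (Hd : smooth (den g gt P)).
  { unfold den. apply sm_mult; [apply sm_mult; auto; apply gdet_sm; auto|].
    apply sm_sqrt; [apply gdet_pos; auto|apply gdet_sm; auto]. }
  assert (Hdp : forall x y, 0 < den g gt P x y).
  { intros; unfold den. apply Rmult_lt_0_compat; [apply Rmult_lt_0_compat|]; auto;
    [apply gdet_pos|apply sqrtG_pos]; auto. }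
  assert (Hs : smooth (fun x y => sqrt (gdet gt x y) * Q x y)).
  { apply sm_mult; auto. apply sm_sqrt; [apply gdet_pos; auto|apply gdet_sm; auto]. }
  repeat split; unfold m11, m12, m21, m22;
  apply (sm_div _ _ Hdp); auto;
  apply (sm_mult (fun x y => sqrt (gdet gt x y) * Q x y)); auto;
  apply sm_minus; apply sm_mult; auto.
Qed.

Lemma Dlin (f1 f2 h : R -> R) u1 u2 x : ex_derive f1 x -> ex_derive f2 x -> ex_derive h x ->
  Derive (fun t => f1 t * (u1 * h t) + f2 t * (u2 * h t)) x =
  (Derive f1 x * u1 + Derive f2 x * u2) * h x + (f1 x * u1 + f2 x * u2) * Derive h x.
Proof.
  intros H1 H2 H3. apply is_derive_unique. auto_derive; auto. change (fun x0 : R => f1 x0) with f1; change (fun x0 : R => f2 x0) with f2; change (fun x0 : R => h x0) with h. ring.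
Qed.

Section S.
Variables (g gt : metric) (P Q : R -> R -> R).
Hypotheses (Hg : is_riemannian_metric g) (Hgt : is_riemannian_metric gt)
  (HPs : smooth_on_torus P) (HQs : smooth_on_torus Q)
  (HP : forall x y, 0 < P x y) (HQ : forall x y, 0 < Q x y)
  (Hk : ker_incl g gt P Q).

Lemma cond u1 u2 s : smooth_on_torus s -> (forall x y, u1 * dx s x y + u2 * dy s x y = 0) ->
  forall x y,
  (dx (m11 g gt P Q) x y * u1 + dx (m12 g gt P Q) x y * u2) * s x y
    + (m11 g gt P Q x y * u1 + m12 g gt P Q x y * u2) * dx s x y
  + ((dy (m21 g gt P Q) x y * u1 + dy (m22 g gt P Q) x y * u2) * s x y
    + (m21 g gt P Q x y * u1 + m22 g gt P Q x y * u2) * dy s x y) = 0.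
Proof.
  intros [Ss Sp] Hdiv x y.
  set (v1 := fun x y => u1 * s x y). set (v2 := fun x y => u2 * s x y).
  assert (V1 : smooth_on_torus v1).
  { split; [apply sm_mult; auto; apply sm_const|].
    intros a b; unfold v1; destruct (Sp a b) as [-> ->]; auto. }
  assert (V2 : smooth_on_torus v2).
  { split; [apply sm_mult; auto; apply sm_const|].
    intros a b; unfold v2; destruct (Sp a b) as [-> ->]; auto. }
  assert (Hd : forall x y, dx v1 x y + dy v2 x y = 0).
  { intros a b; unfold dx, dy, v1, v2. rewrite !Derive_scal. apply Hdiv. }
  pose proof (ker_test g P v1 v2 Hg HP Hd) as K.
  pose proof (Hk _ _ (oneform_test g P v1 v2 Hg HPs HP V1 V2) K x y) as K2.
  unfold wcodiff in K2. rewrite codiff_unfold in K2.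
  destruct (Wt_test g gt P Q v1 v2 Hg Hgt HP HQ) as [E1 E2].
  rewrite E1, E2 in K2.
  pose proof (HQ x y). pose proof (sqrtG_pos gt x y Hgt).
  assert (K3 : dx (fun x y => m11 g gt P Q x y * v1 x y + m12 g gt P Q x y * v2 x y) x y +
     dy (fun x y => m21 g gt P Q x y * v1 x y + m22 g gt P Q x y * v2 x y) x y = 0).
  { apply Rmult_integral in K2. destruct K2 as [K2|K2].
    - exfalso. apply Rinv_neq_0_compat in K2; auto; lra.
    - apply Rmult_integral in K2. destruct K2 as [K2|K2]; auto.
      exfalso. assert (/ sqrt (gdet gt x y) > 0) by (apply Rinv_0_lt_compat; auto). lra. }
  destruct (m_sm g gt P Q Hg Hgt HPs HQs HP) as [M11 [M12 [M21 M22]]].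
  unfold dx, dy, v1, v2 in K3.
  rewrite (Dlin (fun t => m11 g gt P Q t y) (fun t => m12 g gt P Q t y) (fun t => s t y)) in K3;
    try apply sm_exdx; auto.
  rewrite (Dlin (fun t => m21 g gt P Q x t) (fun t => m22 g gt P Q x t) (fun t => s x t)) in K3;
    try apply sm_exdy; auto.
Qed.
End S.

Lemma zero_sc m t : m * cos t = 0 -> m * sin t = 0 -> m = 0.
Proof.
  intros H1 H2. pose proof (sin2_cos2 t). unfold Rsqr in H.
  replace m with (m * (sin t * sin t + cos t * cos t)) by (rewrite H; ring).
  replace (m * (sin t * sin t + cos t * cos t)) with ((m * sin t) * sin t + (m * cos t) * cos t) by ring.
  rewrite H1, H2; ring.
Qed.

Lemma per_sin a : sin (2 * PI * (a + 1)) = sin (2 * PI * a).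
Proof. replace (2 * PI * (a + 1)) with (2 * PI * a + 2 * PI) by ring.
  rewrite sin_plus, sin_2PI, cos_2PI; ring. Qed.
Lemma per_cos a : cos (2 * PI * (a + 1)) = cos (2 * PI * a).
Proof. replace (2 * PI * (a + 1)) with (2 * PI * a + 2 * PI) by ring.
  rewrite cos_plus, sin_2PI, cos_2PI; ring. Qed.

Lemma Dsin a b : Derive (fun t => sin (2 * PI * (t + b))) a = 2 * PI * cos (2 * PI * (a + b)).
Proof. apply is_derive_unique; auto_derive; auto; ring. Qed.
Lemma Dcos a b : Derive (fun t => cos (2 * PI * (t + b))) a = - (2 * PI * sin (2 * PI * (a + b))).
Proof. apply is_derive_unique; auto_derive; auto; ring. Qed.

Lemma const_x (f : R -> R) : (forall t, ex_derive f t) -> (forall t, Derive f t = 0) -> forall a b, f a = f b.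
Proof.
  intros He Hd a b.
  destruct (MVT_gen f a b (fun _ => 0)) as [c [_ Hc]].
  - intros; rewrite <- (Hd x). apply Derive_correct; auto.
  - intros; apply continuity_pt_filterlim.
    apply (ex_derive_continuous (K:=R_AbsRing) (V:=R_NormedModule) f); auto.
  - lra.
Qed.

Lemma sm_s1 (c : R) : smooth_on_torus (fun x y => sin (2 * PI * (x + c))) /\
  smooth_on_torus (fun x y => cos (2 * PI * (x + c))) /\
  smooth_on_torus (fun x y => sin (2 * PI * (y + c))) /\
  smooth_on_torus (fun x y => cos (2 * PI * (y + c))).
Proof.
  repeat split;
  try (first [apply sm_sin | apply sm_cos]; apply sm_mult; [apply sm_const|];
       apply sm_plus; [first [apply sm_x | apply sm_y] | apply sm_const]);
  try (replace (x + 1 + c) with ((x + c) + 1) by ring);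
  try (replace (y + 1 + c) with ((y + c) + 1) by ring);
  rewrite ?per_sin, ?per_cos; auto.
Qed.

Lemma Dsin' a b : Derive (fun t => sin (2 * PI * (a + t))) b = 2 * PI * cos (2 * PI * (a + b)).
Proof. apply is_derive_unique; auto_derive; auto; ring. Qed.
Lemma Dcos' a b : Derive (fun t => cos (2 * PI * (a + t))) b = - (2 * PI * sin (2 * PI * (a + b))).
Proof. apply is_derive_unique; auto_derive; auto; ring. Qed.

Lemma sm_sxy : smooth_on_torus (fun x y => sin (2 * PI * (x + y))) /\
  smooth_on_torus (fun x y => cos (2 * PI * (x + y))).
Proof.
  repeat split;
  try (first [apply sm_sin | apply sm_cos]; apply sm_mult; [apply sm_const|];
       apply sm_plus; [apply sm_x | apply sm_y]);
  try (replace (x + 1 + y) with ((x + y) + 1) by ring);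
  try (replace (x + (y + 1)) with ((x + y) + 1) by ring);
  rewrite ?per_sin, ?per_cos; auto.
Qed.

Section T.
Variables (g gt : metric) (P Q : R -> R -> R).
Hypotheses (Hg : is_riemannian_metric g) (Hgt : is_riemannian_metric gt)
  (HPs : smooth_on_torus P) (HQs : smooth_on_torus Q)
  (HP : forall x y, 0 < P x y) (HQ : forall x y, 0 < Q x y)
  (Hk : ker_incl g gt P Q).

Let C := cond g gt P Q Hg Hgt HPs HQs HP HQ Hk.
Let M11 := m11 g gt P Q.
Let M12 := m12 g gt P Q.
Let M21 := m21 g gt P Q.
Let M22 := m22 g gt P Q.

Lemma AA1 : forall x y, dx M11 x y + dy M21 x y = 0.
Proof.
  intros x y.
  assert (Hs : smooth_on_torus (fun _ _ => 1)) by (split; [apply sm_const|intros a b; auto]).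
  pose proof (C 1 0 _ Hs) as H.
  specialize (H ltac:(intros; unfold dx, dy; rewrite !Derive_const; ring) x y).
  unfold dx, dy in H. rewrite !Derive_const in H.
  unfold dx, dy, M11, M21. lra.
Qed.

Lemma AA2 : forall x y, dx M12 x y + dy M22 x y = 0.
Proof.
  intros x y.
  assert (Hs : smooth_on_torus (fun _ _ => 1)) by (split; [apply sm_const|intros a b; auto]).
  pose proof (C 0 1 _ Hs) as H.
  specialize (H ltac:(intros; unfold dx, dy; rewrite !Derive_const; ring) x y).
  unfold dx, dy in H. rewrite !Derive_const in H.
  unfold dx, dy, M12, M22. lra.
Qed.

Lemma Z21 : forall x y, M21 x y = 0.
Proof.
  intros x y. destruct (sm_s1 0) as [_ [_ [S1 S2]]].
  pose proof (C 1 0 _ S1) as H1. pose proof (C 1 0 _ S2) as H2.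
  specialize (H1 ltac:(intros; unfold dx, dy; rewrite Derive_const; ring) x y).
  specialize (H2 ltac:(intros; unfold dx, dy; rewrite Derive_const; ring) x y).
  unfold dx, dy in H1, H2. rewrite ?Derive_const in H1, H2. rewrite (Dsin y 0) in H1. rewrite (Dcos y 0) in H2.
  pose proof (AA1 x y). unfold dx, dy in H.
  pose proof PI_RGT_0.
  apply (zero_sc _ (2 * PI * (y + 0))).
  - apply (Rmult_eq_reg_l (2 * PI)); [|lra].
    unfold M11, M21 in *. nra.
  - apply (Rmult_eq_reg_l (2 * PI)); [|lra].
    unfold M11, M21 in *. nra.
Qed.

Lemma Z12 : forall x y, M12 x y = 0.
Proof.
  intros x y. destruct (sm_s1 0) as [S1 [S2 _]].
  pose proof (C 0 1 _ S1) as H1. pose proof (C 0 1 _ S2) as H2.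
  specialize (H1 ltac:(intros; unfold dx, dy; rewrite Derive_const; ring) x y).
  specialize (H2 ltac:(intros; unfold dx, dy; rewrite Derive_const; ring) x y).
  unfold dx, dy in H1, H2. rewrite ?Derive_const in H1, H2. rewrite (Dsin x 0) in H1. rewrite (Dcos x 0) in H2.
  pose proof (AA2 x y). unfold dx, dy in H.
  pose proof PI_RGT_0.
  apply (zero_sc _ (2 * PI * (x + 0))).
  - apply (Rmult_eq_reg_l (2 * PI)); [|lra].
    unfold M12, M22 in *. nra.
  - apply (Rmult_eq_reg_l (2 * PI)); [|lra].
    unfold M12, M22 in *. nra.
Qed.

Lemma E1122 : forall x y, M11 x y = M22 x y.
Proof.
  intros x y. destruct sm_sxy as [S1 S2].
  pose proof (C 1 (-1) _ S1) as H1. pose proof (C 1 (-1) _ S2) as H2.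
  specialize (H1 ltac:(intros; unfold dx, dy; rewrite Dsin, Dsin'; ring) x y).
  specialize (H2 ltac:(intros; unfold dx, dy; rewrite Dcos, Dcos'; ring) x y).
  unfold dx, dy in H1, H2. rewrite Dsin, Dsin' in H1. rewrite Dcos, Dcos' in H2.
  pose proof (AA1 x y). pose proof (AA2 x y). unfold dx, dy in H, H0.
  pose proof (Z12 x y). pose proof (Z21 x y).
  pose proof PI_RGT_0.
  assert (M11 x y - M22 x y = 0); [|lra].
  apply (zero_sc _ (2 * PI * (x + y))).
  - apply (Rmult_eq_reg_l (2 * PI)); [|lra].
    unfold M11, M12, M21, M22 in *. nra.
  - apply (Rmult_eq_reg_l (2 * PI)); [|lra].
    unfold M11, M12, M21, M22 in *. nra.
Qed.
End T.

Lemma frac0 a b c d : 0 < a -> 0 < b -> 0 < d -> a * b * c / d = 0 -> c = 0.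
Proof.
  intros Ha Hb Hd H.
  replace c with ((a * b * c / d) * d / (a * b)) by (field; lra).
  rewrite H. field; lra.
Qed.


Theorem proposition7 (g gt : metric) (P Q : R -> R -> R) :
  is_riemannian_metric g -> is_riemannian_metric gt ->
  smooth_on_torus P -> smooth_on_torus Q ->
  (forall x y, 0 < P x y) -> (forall x y, 0 < Q x y) ->
  ker_incl g gt P Q ->
  conformally_equivalent g gt /\ exists c : R, 0 < c /\ forall x y, P x y = c * Q x y.
Proof.
  intros Hg Hgt HPs HQs HP HQ Hk.
  pose proof (Z12 g gt P Q Hg Hgt HPs HQs HP HQ Hk) as Z12.
  pose proof (Z21 g gt P Q Hg Hgt HPs HQs HP HQ Hk) as Z21.
  pose proof (E1122 g gt P Q Hg Hgt HPs HQs HP HQ Hk) as E11.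
  pose proof (AA1 g gt P Q Hg Hgt HPs HQs HP HQ Hk) as AA1.
  pose proof (AA2 g gt P Q Hg Hgt HPs HQs HP HQ Hk) as AA2.
  simpl in *.
  pose proof Hg as [[S11 P11] [[S12 P12] [[S22 P22] [G11 _]]]].
  pose proof Hgt as [[T11 R11] [[T12 R12] [[T22 R22] [H11 _]]]].
  assert (Hden : forall x y, 0 < den g gt P x y).
  { intros; unfold den. apply Rmult_lt_0_compat; [apply Rmult_lt_0_compat|]; auto;
    [apply gdet_pos|apply sqrtG_pos]; auto. }
  assert (Hsg : forall x y, 0 < sqrt (gdet gt x y)) by (intros; apply sqrtG_pos; auto).
  assert (R1 : forall x y, g22 gt x y * g12 g x y - g12 gt x y * g22 g x y = 0).
  { intros x y. specialize (Z12 x y). unfold m12 in Z12. apply (frac0 (sqrt (gdet gt x y)) (Q x y) _ (den g gt P x y)); auto. }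
  assert (R2 : forall x y, g11 gt x y * g12 g x y - g12 gt x y * g11 g x y = 0).
  { intros x y. specialize (Z21 x y). unfold m21 in Z21. apply (frac0 (sqrt (gdet gt x y)) (Q x y) _ (den g gt P x y)); auto. }
  assert (R3 : forall x y, g22 gt x y * g11 g x y - g11 gt x y * g22 g x y = 0).
  { intros x y. specialize (E11 x y). unfold m11, m22 in E11.
    assert (E : sqrt (gdet gt x y) * Q x y *
      ((g22 gt x y * g11 g x y - g12 gt x y * g12 g x y) -
       (g11 gt x y * g22 g x y - g12 gt x y * g12 g x y)) / den g gt P x y = 0).
    { unfold Rdiv in *. rewrite Rmult_minus_distr_l. rewrite Rmult_minus_distr_r. lra. }
    apply (frac0 (sqrt (gdet gt x y)) (Q x y) _ (den g gt P x y)) in E; auto. lra. }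
  set (lam := fun x y => g11 gt x y / g11 g x y).
  assert (Hl : forall x y, g11 gt x y = lam x y * g11 g x y /\ g12 gt x y = lam x y * g12 g x y /\
                g22 gt x y = lam x y * g22 g x y).
  { intros x y. specialize (G11 x y). specialize (R2 x y). specialize (R3 x y). unfold lam.
    split; [field; lra|]. split.
    - apply (Rmult_eq_reg_l (g11 g x y)); [|lra]. field_simplify; [lra|lra].
    - apply (Rmult_eq_reg_l (g11 g x y)); [|lra]. field_simplify; [lra|lra]. }
  assert (Hlp : forall x y, 0 < lam x y).
  { intros; unfold lam. apply Rdiv_lt_0_compat; auto. }
  split.
  { exists lam. split; [|split; auto].
    split.
    - apply sm_div; auto.
    - intros x y; unfold lam; destruct (P11 x y) as [-> ->]; destruct (R11 x y) as [-> ->]; auto. }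
  assert (Mqp : forall x y, m11 g gt P Q x y = Q x y / P x y).
  { intros x y. destruct (Hl x y) as [L1 [L2 L3]].
    assert (Gt : gdet gt x y = (lam x y * sqrt (gdet g x y)) * (lam x y * sqrt (gdet g x y))).
    { unfold gdet at 1. rewrite L1, L2, L3.
      replace ((lam x y * sqrt (gdet g x y)) * (lam x y * sqrt (gdet g x y))) with
        (lam x y * lam x y * (sqrt (gdet g x y) * sqrt (gdet g x y))) by ring.
      rewrite sqrt_sq_G; auto. unfold gdet; ring. }
    assert (Sq : sqrt (gdet gt x y) = lam x y * sqrt (gdet g x y)).
    { rewrite Gt. apply sqrt_square. apply Rlt_le, Rmult_lt_0_compat; auto; apply sqrtG_pos; auto. }
    unfold m11, den. rewrite Sq, Gt, L2, L3.
    pose proof (Hlp x y). pose proof (sqrtG_pos g x y Hg). pose proof (HP x y).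
    pose proof (sqrt_sq_G g x y Hg). pose proof (gdet_pos g Hg x y).
    replace (lam x y * g22 g x y * g11 g x y - lam x y * g12 g x y * g12 g x y)
      with (lam x y * gdet g x y) by (unfold gdet; ring).
    set (s := sqrt (gdet g x y)) in *. rewrite <- H2. field. repeat split; lra. }
  destruct (m_sm g gt P Q Hg Hgt HPs HQs HP) as [M11 [M12 [M21 M22]]].
  assert (Dx : forall x y, Derive (fun t => m11 g gt P Q t y) x = 0).
  { intros x y. pose proof (AA1 x y) as H. unfold dx, dy in H.
    rewrite (Derive_ext (fun t => m21 g gt P Q x t) (fun _ => 0)) in H; [|intros; apply Z21].
    rewrite Derive_const in H. lra. }
  assert (Dy : forall x y, Derive (fun t => m11 g gt P Q x t) y = 0).
  { intros x y. pose proof (AA2 x y) as H. unfold dx, dy in H.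
    rewrite (Derive_ext (fun t => m12 g gt P Q t y) (fun _ => 0)) in H; [|intros; apply Z12].
    rewrite (Derive_ext (fun t => m22 g gt P Q x t) (fun t => m11 g gt P Q x t)) in H;
      [|intros; symmetry; apply E11].
    rewrite Derive_const in H. lra. }
  assert (Cst : forall x y, m11 g gt P Q x y = m11 g gt P Q 0 0).
  { intros x y.
    rewrite (const_x (fun t => m11 g gt P Q t y) (fun t => sm_exdx _ M11 t y) (fun t => Dx t y) x 0).
    apply (const_x (fun t => m11 g gt P Q 0 t) (fun t => sm_exdy _ M11 0 t) (fun t => Dy 0 t) y 0). }
  exists (P 0 0 / Q 0 0). split.
  - apply Rdiv_lt_0_compat; auto.
  - intros x y. specialize (Cst x y). rewrite !Mqp in Cst.
    pose proof (HP x y). pose proof (HQ x y). pose proof (HP 0 0). pose proof (HQ 0 0).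
    apply (Rmult_eq_reg_l (Q 0 0 / (P x y * P 0 0))).
    + replace (Q 0 0 / (P x y * P 0 0) * P x y) with (Q 0 0 / P 0 0) by (field; lra).
      rewrite <- Cst. field; lra.
    + apply Rgt_not_eq, Rdiv_lt_0_compat; auto; apply Rmult_lt_0_compat; auto.
Qed.
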